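(* Assume every tuple $t\in R_x$ has $w_{tj}>0$ for at least one $j$, so that all marginal gains $\mathbb{Q}(B\cup\{t\})-\mathbb{Q}(B)$ for $t\notin B$ are strictly positive, and assume $K\le N$. Define $$\kappa=1-\min_{t\in R_x}\ \min_{A,B\subseteq R_x\setminus\{t\}}\frac{\mathbb{Q}(A\cup\{t\})-\mathbb{Q}(A)}{\mathbb{Q}(B\cup\{t\})-\mathbb{Q}(B)}.$$ Let $O\subseteq R_x$ with $|O|\le K$ be an optimal deletion set, i.e. one maximizing $\mathbb{Q}$ among all sets of size at most $K$. Let $\Delta D$ be the output of the deletion-only greedy procedure, defined as follows. Start with $\Delta D_0=\emptyset$. For $i=0,\dots,K-1$, set $\Delta D_{i+1}=\Delta D_i\cup\{t\}$, where $t\in R_x\setminus \Delta D_i$ maximizes $\mathbb{Q}(\Delta D_i\cup\{t\})$. Finally $\Delta D=\Delta D_K$. Then $$\mathbb{Q}(\Delta D)\ \ge\ (1-\kappa)\,\mathbb{Q}(O).$$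
   Context: Setting: $R_x=\{t_1,\dots,t_N\}$ and $M$ queries, with joint weights $w_{ij}\in\mathbb{Z}_{\ge0}$ and $C_j=\sum_{i=1}^N w_{ij}$. The deletion-only total Qerror is $\mathbb{Q}(X)=\sum_{j=1}^M\frac{C_j+1}{C_j+1-\sum_{t_i\in X}w_{ij}}$ for $X\subseteq R_x$, where $X$ is the set of deleted tuples, and $K$ is the attack budget. *)

(* Defs.v *)
From HB Require Import structures.
From mathcomp Require Import all_boot all_order all_algebra.
Set Implicit Arguments. Unset Strict Implicit. Unset Printing Implicit Defensive.
Import Order.TTheory GRing.Theory Num.Theory.
Local Open Scope ring_scope.

(* Tuples t_1..t_N are indexed by 'I_N, queries by 'I_M; w i j = w_{ij}. *)

Definition Ctot (N M : nat) (w : 'I_N -> 'I_M -> nat) (j : 'I_M) : nat :=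
  (\sum_(i < N) w i j)%N.

(* Deletion-only total Qerror Q(X), X = set of deleted tuples. *)
Definition Qerr (R : realFieldType) (N M : nat) (w : 'I_N -> 'I_M -> nat)
  (X : {set 'I_N}) : R :=
  \sum_(j < M) ((Ctot w j).+1%:R /
                ((Ctot w j).+1%:R - (\sum_(i in X) w i j)%N%:R)).

Definition gain (R : realFieldType) (N M : nat) (w : 'I_N -> 'I_M -> nat)
  (t : 'I_N) (A : {set 'I_N}) : R :=
  Qerr R w (t |: A) - Qerr R w A.

(* min_t min_{A,B subset R_x \ {t}} gain t A / gain t B.  The fold uses
   default 1; since A = B gives ratio 1, this is the exact minimum whenever
   N >= 1. *)
Definition gammaQ (R : realFieldType) (N M : nat) (w : 'I_N -> 'I_M -> nat) : R :=
  \big[Num.min/1]_(t : 'I_N)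
    \big[Num.min/1]_(A : {set 'I_N} | t \notin A)
      \big[Num.min/1]_(B : {set 'I_N} | t \notin B)
        (gain R w t A / gain R w t B).

Definition kappaQ (R : realFieldType) (N M : nat) (w : 'I_N -> 'I_M -> nat) : R :=
  1 - gammaQ R w.

Definition greedy_run (R : realFieldType) (N M : nat) (w : 'I_N -> 'I_M -> nat)
  (K : nat) (D : nat -> {set 'I_N}) : Prop :=
  D 0%N = set0 /\
  forall i : nat, (i < K)%N ->
    exists t : 'I_N, [/\ t \notin D i, D i.+1 = t |: D i &
      forall t' : 'I_N, t' \notin D i ->
        Qerr R w (t' |: D i) <= Qerr R w (t |: D i)].

(* Main.v *)
Require Import Defs.
From HB Require Import structures.
From mathcomp Require Import all_boot all_order all_algebra.
Import Order.TTheory GRing.Theory Num.Theory.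
Local Open Scope ring_scope.

Section Aux.
Variables (R : realFieldType) (N M : nat) (w : 'I_N -> 'I_M -> nat).

Lemma sum_le_C (X : {set 'I_N}) j : (\sum_(i in X) w i j <= Ctot w j)%N.
Proof.
rewrite /Ctot [X in (_ <= X)%N](bigID (fun i => i \in X)) /=; exact: leq_addr.
Qed.

Lemma gamma_le1 : gammaQ R w <= 1.
Proof. exact: bigmin_le_id. Qed.

Lemma gamma_le t (A B : {set 'I_N}) : t \notin A -> t \notin B ->
  gammaQ R w <= gain R w t A / gain R w t B.
Proof.
move=> tA tB; rewrite /gammaQ.
apply: (bigmin_inf t) => //.
apply: (bigmin_inf A) => //.
exact: (bigmin_inf B).
Qed.

Lemma Qerr0_ge0 : 0 <= Qerr R w set0.
Proof.
apply: sumr_ge0 => j _; rewrite big_set0 subr0 divr_ge0 //.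
Qed.

Lemma term_le (c a b : nat) : (a <= b)%N -> (b < c)%N ->
  c%:R / (c%:R - a%:R) <= c%:R / (c%:R - b%:R) :> R.
Proof.
move=> ab bc.
have hb : 0 < c%:R - b%:R :> R by rewrite subr_gt0 ltr_nat.
have ha : 0 < c%:R - a%:R :> R by rewrite subr_gt0 ltr_nat (leq_ltn_trans ab).
rewrite ler_pM2l ?ltr0n ?(leq_ltn_trans _ bc) //.
by rewrite lef_pV2 ?posrE // lerB // ler_nat.
Qed.

Lemma term_lt (c a b : nat) : (a < b)%N -> (b < c)%N ->
  c%:R / (c%:R - a%:R) < c%:R / (c%:R - b%:R) :> R.
Proof.
move=> ab bc.
have hb : 0 < c%:R - b%:R :> R by rewrite subr_gt0 ltr_nat.
have ha : 0 < c%:R - a%:R :> R by rewrite subr_gt0 ltr_nat (ltn_trans ab).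
rewrite ltr_pM2l ?ltr0n ?(leq_ltn_trans _ bc) //.
by rewrite ltf_pV2 ?posrE // ltrD2l ltrN2 ltr_nat.
Qed.

Lemma gain_pos t (A : {set 'I_N}) : (exists j, (0 < w t j)%N) -> t \notin A -> 0 < gain R w t A.
Proof.
move=> [j0 hj0] tA; rewrite /gain subr_gt0 /Qerr.
rewrite (bigD1 j0) //= [X in _ < X](bigD1 j0) //=.
apply: ltr_leD.
  rewrite big_setU1 //=; apply: term_lt; first by rewrite -{1}(add0n (\sum_(i in A) _)%N) ltn_add2r.
  by rewrite ltnS -(big_setU1 _ tA) sum_le_C.
apply: ler_sum => j _; rewrite big_setU1 //=; apply: term_le; first exact: leq_addl.
by rewrite ltnS -(big_setU1 _ tA) sum_le_C.
Qed.

End Aux.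
Arguments gain_pos {R N M w t A}.
Arguments gamma_le {R N M w t A B}.

Theorem theorem4p3 (R : realFieldType) (N M K : nat)
  (w : 'I_N -> 'I_M -> nat)
  (hpos : forall t : 'I_N, exists j : 'I_M, (0 < w t j)%N)
  (hK : (K <= N)%N)
  (O : {set 'I_N}) (hOcard : (#|O| <= K)%N)
  (hOopt : forall X : {set 'I_N}, (#|X| <= K)%N -> Qerr R w X <= Qerr R w O)
  (D : nat -> {set 'I_N}) (hD : greedy_run R w K D) :
  Qerr R w (D K) >= (1 - kappaQ R w) * Qerr R w O.
Proof.
rewrite /kappaQ opprB addrC subrK.
set g := gammaQ R w.
case: hD => hD0 hDs.
have key : forall i, (i <= K)%N -> (#|D i| <= i)%N /\
   forall S : {set 'I_N}, (#|S| <= i)%N -> g * Qerr R w S <= Qerr R w (D i).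
  elim=> [|i IH] hi.
    rewrite hD0 cards0; split=> // S; rewrite leqn0 cards_eq0 => /eqP ->.
    rewrite -[X in _ <= X]mul1r ler_wpM2r ?Qerr0_ge0 ?gamma_le1 //.
  have [hc IHS] := IH (ltnW hi).
  have [t [tD -> tmax]] := hDs i hi.
  have gt : 0 <= gain R w t (D i) by exact: ltW (gain_pos (hpos t) tD).
  split; first by rewrite cardsU1 tD add1n ltnS.
  move=> S hS.
  have eqQ : Qerr R w (t |: D i) = Qerr R w (D i) + gain R w t (D i).
    by rewrite /gain addrC subrK.
  case: (boolP (S \subset D i)) => sub.
    rewrite eqQ -[X in X <= _]addr0; apply: lerD => //.
    by apply: IHS; apply: leq_trans (subset_leq_card sub) hc.
  have [s sS sD] : exists2 s, s \in S & s \notin D i.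
    case/subsetPn: sub => s ? ?; by exists s.
  have eqS : Qerr R w S = Qerr R w (S :\ s) + gain R w s (S :\ s).
    by rewrite /gain setD1K // addrC subrK.
  have sS' : s \notin S :\ s by rewrite !inE eqxx.
  rewrite eqS mulrDr eqQ; apply: lerD.
    apply: IHS; rewrite -ltnS; apply: leq_trans hS.
    by rewrite (cardsD1 s S) sS.
  have gs := gain_pos (R:=R) (hpos s) sS'.
  apply: (@le_trans _ _ (gain R w s (D i))).
    have := gamma_le (R:=R) (w:=w) sD sS'; rewrite -/g => hg.
    by move: hg; rewrite ler_pdivlMr // mulrC.
  have := tmax s sD; rewrite /gain => h; exact: lerB.
by have [_ ->] := key K (leqnn K).
Qed.
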